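(* Let $D$ be an integral domain and $\star$ a semistar operation on $D$. The following are equivalent: (i) $D$ is a P$\star$MD; (ii) for every overring $T$ of $D$ and every semistar operation $\star'$ on $T$ such that $T$ is $(\star,\star')$-linked to $D$, $T$ is $(\star,\star')$-flat over $D$; (iii) for every overring $T$ of $D$, $T$ is $(\star,\ell_{\star,T})$-flat over $D$; (iv) every overring of $D$ that is $t$-linked to $(D,\star)$ is $t$-flat over $(D,\star)$; (v) every overring $T$ of $D$ that is $(\star,d_T)$-linked to $D$ is $(\star,d_T)$-flat over $D$.
   Context: Let $D$ be an integral domain with quotient field $K$. $\overline{\mathbf F}(D)$ denotes the set of all nonzero $D$-submodules of $K$ and $\mathbf f(D)$ the set of nonzero finitely generated $D$-submodules of $K$. A semistar operation on $D$ is a map $\star:\overline{\mathbf F}(D)\to\overline{\mathbf F}(D)$, $E\mapsto E^\star$, such that for all $0\ne x\in K$ and $E,F\in\overline{\mathbf F}(D)$: (1) $(xE)^\star=xE^\star$; (2) $E\subseteq F\Rightarrow E^\star\subseteq F^\star$; (3) $E\subseteq E^\star$ and $(E^\star)^\star=E^\star$. $\star_f$ is defined by $E^{\star_f}=\bigcup\{F^\star:F\in\mathbf f(D),F\subseteq E\}$. A nonzero ideal $I$ of $D$ is a quasi-$\star$-ideal if $I^\star\cap D=I$; a quasi-$\star$-prime is a prime quasi-$\star$-ideal. An overring of $D$ is a ring $T$ with $D\subseteq T\subseteq K$; the same notions are defined on $T$. $d_T$ is the identity operation on $T$; $v_T$ is $E\mapsto(T:_K(T:_KE))$ and $t_T:=(v_T)_f$.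 $T$ is $(\star,\star')$-linked to $D$ if for every nonzero finitely generated ideal $F\subseteq D$ with $F^\star=D^\star$ one has $(FT)^{\star'}=T^{\star'}$; $T$ is $t$-linked to $(D,\star)$ if it is $(\star,t_T)$-linked to $D$. $T$ is $(\star,\star')$-flat over $D$ if it is $(\star,\star')$-linked to $D$ and $D_{Q\cap D}=T_Q$ for every quasi-$\star'_f$-prime ideal $Q$ of $T$; $T$ is $t$-flat over $(D,\star)$ if it is $(\star,t_T)$-flat over $D$. The semistar operation $\ell_{\star,T}$ on $T$ is $E^{\ell_{\star,T}}=\bigcap\{ET_{D\setminus P}:P$ a quasi-$\star_f$-prime of $D\}$ (equal to $K$ if there are none). $D$ is a P$\star$MD if every $F\in\mathbf f(D)$ satisfies $(FF^{-1})^{\star_f}=D^\star$, where $F^{-1}=(D:_KF)$. *)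

(* Defs.v *)
(* The quotient field K of D is an abstract field; D and
   all its overrings are subrings of K, and D-submodules of K are
   predicates on K (Prop-valued subsets). *)
From mathcomp Require Import all_boot all_order all_algebra.
Set Implicit Arguments. Unset Strict Implicit. Unset Printing Implicit Defensive.
Import GRing.Theory.
Local Open Scope ring_scope.

Section Defs.
Variable K : fieldType.

Definition kset := K -> Prop.

Definition subset (A B : kset) : Prop := forall x, A x -> B x.
Definition seteq (A B : kset) : Prop := forall x, A x <-> B x.

Definition is_subring (R : kset) : Prop :=
  [/\ R 0, R 1, (forall x y, R x -> R y -> R (x + y)),
      (forall x, R x -> R (- x)) & (forall x y, R x -> R y -> R (x * y))].

Definition is_quotient_field (D : kset) : Prop :=
  forall x, exists a b, [/\ D a, D b, b != 0 & x = a / b].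

Definition overring (D T : kset) : Prop := is_subring T /\ subset D T.

Definition submodule (R E : kset) : Prop :=
  [/\ E 0, (forall x y, E x -> E y -> E (x + y)) &
      (forall r x, R r -> E x -> E (r * x))].

Definition nonzero (E : kset) : Prop := exists x, x != 0 /\ E x.

Definition Fbar (R E : kset) : Prop := submodule R E /\ nonzero E.

Definition mulset (A B : kset) : kset := fun x =>
  exists s : seq (K * K),
    (forall p, p \in s -> A p.1 /\ B p.2) /\ x = \sum_(p <- s) p.1 * p.2.

Definition span (R : kset) (s : seq K) : kset :=
  mulset (fun y => y \in s) R.

Definition fgen (R E : kset) : Prop :=
  (exists s : seq K, seteq E (span R s)) /\ nonzero E.

Definition scale (x : K) (E : kset) : kset := fun y => exists e, E e /\ y = x * e.

Definition semistar (R : kset) (star : kset -> kset) : Prop :=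
  [/\ (forall E, Fbar R E -> Fbar R (star E)),
      (forall x E, x != 0 -> Fbar R E -> seteq (star (scale x E)) (scale x (star E))),
      (forall E F, Fbar R E -> Fbar R F -> subset E F -> subset (star E) (star F)),
      (forall E, Fbar R E -> subset E (star E)) &
      (forall E, Fbar R E -> seteq (star (star E)) (star E))].

Definition star_f (R : kset) (star : kset -> kset) : kset -> kset :=
  fun E x => exists F, [/\ fgen R F, subset F E & star F x].

Definition ideal (R I : kset) : Prop := subset I R /\ submodule R I /\ nonzero I.

Definition quasi_ideal (R : kset) (star : kset -> kset) (I : kset) : Prop :=
  ideal R I /\ seteq (fun x => star I x /\ R x) I.

Definition is_prime (R P : kset) : Prop :=
  (exists x, R x /\ ~ P x) /\
  (forall a b, R a -> R b -> P (a * b) -> P a \/ P b).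

Definition quasi_prime (R : kset) (star : kset -> kset) (P : kset) : Prop :=
  quasi_ideal R star P /\ is_prime R P.

Definition frac (A S P : kset) : kset := fun x =>
  exists a s, [/\ A a, S s, ~ P s & x = a / s].

Definition loc (R P : kset) : kset := frac R R P.

Definition d_op : kset -> kset := fun E => E.
Definition colon (R E : kset) : kset := fun x => forall e, E e -> R (x * e).
Definition v_op (T : kset) : kset -> kset := fun E => colon T (colon T E).
Definition t_op (T : kset) : kset -> kset := star_f T (v_op T).

Definition linked (D : kset) (star : kset -> kset) (T : kset) (star' : kset -> kset) : Prop :=
  forall F, fgen D F -> subset F D -> seteq (star F) (star D) ->
    seteq (star' (mulset F T)) (star' T).

Definition flat (D : kset) (star : kset -> kset) (T : kset) (star' : kset -> kset) : Prop :=
  linked D star T star' /\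
  forall Q, quasi_prime T (star_f T star') Q ->
    seteq (loc D (fun x => Q x /\ D x)) (loc T Q).

Definition ell_op (D : kset) (star : kset -> kset) (T : kset) : kset -> kset :=
  fun E x => forall P, quasi_prime D (star_f D star) P -> mulset E (frac T D P) x.

Definition PstarMD (D : kset) (star : kset -> kset) : Prop :=
  forall F, fgen D F -> seteq (star_f D star (mulset F (colon D F))) (star D).

End Defs.

(* Main.v *)
Require Import Defs.
From mathcomp Require Import all_boot all_order all_algebra.
From mathcomp Require classical_sets.
From mathcomp Require Import ring.
From Stdlib Require Import Classical.
Require Import Defs.
Set Implicit Arguments. Unset Strict Implicit. Unset Printing Implicit Defensive.
Import GRing.Theory.
Local Open Scope ring_scope.


Lemma zorn_wrap (T : Type) (P : (T -> Prop) -> Prop) :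
  (forall F : (T -> Prop) -> Prop, (forall X, F X -> P X) ->
     (forall X Y, F X -> F Y -> (forall x, X x -> Y x) \/ (forall x, Y x -> X x)) ->
     P (fun x => exists X, F X /\ X x)) ->
  exists A, P A /\ forall B, P B -> (forall x, A x -> B x) -> forall x, B x -> A x.
Proof.
move=> H.
have [A [PA Amax]] : exists A, P A /\ (forall B, classical_sets.proper A B -> ~ P B).
  apply: classical_sets.Zorn_bigcup => F FP tot.
  have -> : classical_sets.bigcup F id = (fun x => exists X, F X /\ X x).
    apply: boolp.funext => x; apply: boolp.propext; split.
      by case=> X FX Xx; exists X.
    by case=> X [FX Xx]; exists X.
  apply: H; first exact: FP.
  move=> X Y FX FY; case: (tot X Y FX FY) => h; [left|right]; exact: h.
exists A; split => // B PB AB x Bx.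
apply: NNPP => nAx; apply: (Amax B) => //; split; first exact: AB.
by move=> BA; apply: nAx; apply: BA.
Qed.


Section Basic.
Variable K : fieldType.
Implicit Types (A B C D R T : kset K) (x y : K).

Lemma mulset_sub A B C : C 0 -> (forall x y, C x -> C y -> C (x + y)) ->
  (forall a b, A a -> B b -> C (a * b)) -> subset (mulset A B) C.
Proof.
move=> C0 Cadd Cab x [s [hs ->]]; elim: s hs => [|p s IH] hs.
  by rewrite big_nil.
rewrite big_cons; apply: Cadd.
  by have [] := hs p (mem_head _ _); exact: Cab.
by apply: IH => q qs; apply: hs; rewrite in_cons qs orbT.
Qed.

Lemma mulset0 A B : mulset A B 0.
Proof. by exists [::]; rewrite big_nil. Qed.

Lemma mulsetD A B x y : mulset A B x -> mulset A B y -> mulset A B (x + y).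
Proof.
move=> [s [hs ->]] [t [ht ->]]; exists (s ++ t); rewrite big_cat; split => // p.
by rewrite mem_cat => /orP [] ?; [apply: hs | apply: ht].
Qed.

Lemma mulset1 A B a b : A a -> B b -> mulset A B (a * b).
Proof.
by move=> Aa Bb; exists [:: (a, b)]; rewrite big_seq1; split => // p; rewrite inE => /eqP ->.
Qed.

Lemma mulset_mono A A' B B' : subset A A' -> subset B B' -> subset (mulset A B) (mulset A' B').
Proof.
move=> AA BB; apply: mulset_sub; [exact: mulset0|exact: mulsetD|].
by move=> a b Aa Bb; apply: mulset1; [apply: AA|apply: BB].
Qed.

Lemma mulset_out A B C x : C 0 -> (forall x y, C x -> C y -> C (x + y)) ->
  mulset A B x -> ~ C x -> exists a b, [/\ A a, B b & ~ C (a * b)].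
Proof.
move=> C0 Cadd mx nCx; apply: NNPP => hn; apply: nCx.
apply: (mulset_sub C0 Cadd) mx => a b Aa Bb; apply: NNPP => nC; apply: hn.
by exists a, b.
Qed.

Lemma subring0 R : is_subring R -> R 0. Proof. by case. Qed.
Lemma subring1 R : is_subring R -> R 1. Proof. by case. Qed.
Lemma subringD R : is_subring R -> forall x y, R x -> R y -> R (x + y). Proof. by case. Qed.
Lemma subringN R : is_subring R -> forall x, R x -> R (- x). Proof. by case. Qed.
Lemma subringM R : is_subring R -> forall x y, R x -> R y -> R (x * y). Proof. by case. Qed.
Lemma subringB R : is_subring R -> forall x y, R x -> R y -> R (x - y).
Proof. by move=> hR x y Rx Ry; apply: subringD => //; apply: subringN. Qed.

Lemma span_sub R s C : C 0 -> (forall x y, C x -> C y -> C (x + y)) ->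
  (forall y r, y \in s -> R r -> C (y * r)) -> subset (span R s) C.
Proof. by move=> C0 Cadd h; apply: mulset_sub. Qed.

Lemma span_gen R s y : R 1 -> y \in s -> span R s y.
Proof. by move=> R1 ys; rewrite -[y]mulr1; apply: mulset1. Qed.

Lemma span_submod R s : is_subring R -> submodule R (span R s).
Proof.
move=> hR; split; [exact: mulset0|exact: mulsetD|].
move=> r x Rr; apply: (@mulset_sub _ _ (fun x => span R s (r * x))).
- by rewrite mulr0; exact: mulset0.
- by move=> a b ha hb; rewrite mulrDr; exact: mulsetD.
- move=> a b sa Rb; rewrite mulrCA; apply: mulset1 => //.
  exact: subringM.
Qed.

Lemma span_mono R s t : R 1 -> (forall y, y \in s -> y \in t) -> subset (span R s) (span R t).
Proof. by move=> R1 st; apply: mulset_mono => // y; apply: st. Qed.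

Lemma span_in_submod R s E : submodule R E -> (forall y, y \in s -> E y) -> subset (span R s) E.
Proof.
case=> E0 Eadd Emul h; apply: span_sub => // y r ys Rr.
by rewrite mulrC; apply: Emul => //; apply: h.
Qed.

Lemma span_ringmono R T s : subset R T -> subset (span R s) (span T s).
Proof. by move=> RT; apply: mulset_mono. Qed.

Lemma seteq_sym A B : seteq A B -> seteq B A.
Proof. by move=> h x; split => /h. Qed.

Lemma submod_seteq R A B : seteq A B -> submodule R A -> submodule R B.
Proof.
move=> h [A0 Aadd Amul]; split.
- by apply/h.
- by move=> x y /h Ax /h Ay; apply/h; apply: Aadd.
- by move=> r x Rr /h Ax; apply/h; apply: Amul.
Qed.

Lemma fgen_Fbar R E : is_subring R -> fgen R E -> Fbar R E.
Proof.
move=> hR [[s hs] nz]; split => //; apply: (submod_seteq (seteq_sym hs)).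
exact: span_submod.
Qed.

Lemma span_fgen R s y : is_subring R -> y \in s -> y != 0 -> fgen R (span R s).
Proof.
move=> hR ys y0; split; first by exists s.
by exists y; split => //; apply: span_gen => //; case: hR.
Qed.

Lemma span_nz_gen R s : nonzero (span R s) -> exists2 y, y \in s & y != 0.
Proof.
case=> x [x0 sx]; apply: NNPP => hn; apply: (negP x0); apply/eqP.
apply: (@span_sub R s (fun x => x = 0) erefl _ _ x sx).
  by move=> ? ? -> ->; rewrite addr0.
move=> y r ys _; case: (boolP (y == 0)) => [/eqP->|y0]; first by rewrite mul0r.
by exfalso; apply: hn; exists y.
Qed.

Lemma fgen_span R E : fgen R E -> exists s, seteq E (span R s) /\ exists2 y, y \in s & y != 0.
Proof.
case=> [[s hs] [x [x0 Ex]]]; exists s; split => //; apply: span_nz_gen.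
by exists x; split => //; apply/hs.
Qed.

End Basic.


Section Star.
Variable K : fieldType.
Implicit Types (A B C E F G R T : kset K) (x y : K).

Lemma starf_ext R op E E' : seteq E E' -> seteq (star_f R op E) (star_f R op E').
Proof.
move=> h x; split; case=> F [fF FE Fx]; exists F; split => // y /FE; by move/h.
Qed.

Lemma Fbar_self R : is_subring R -> Fbar R R.
Proof.
move=> hR; split; last by exists 1; split; [exact: oner_neq0|exact: (subring1 hR)].
split; [exact: (subring0 hR)|exact: (subringD hR)|exact: (subringM hR)].
Qed.

Variables (D : kset K) (star : kset K -> kset K).
Hypotheses (hD : is_subring D) (hstar : semistar D star).

Lemma star_Fbar E : Fbar D E -> Fbar D (star E). Proof. by case: hstar => h *; apply: h. Qed.
Lemma star_mono E F : Fbar D E -> Fbar D F -> subset E F -> subset (star E) (star F).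
Proof. by case: hstar => _ _ h *; apply: h. Qed.
Lemma star_ext E : Fbar D E -> subset E (star E). Proof. by case: hstar => _ _ _ h *; apply: h. Qed.
Lemma star_idem E : Fbar D E -> seteq (star (star E)) (star E).
Proof. by case: hstar => _ _ _ _ h *; apply: h. Qed.
Lemma star_scale x E : x != 0 -> Fbar D E -> seteq (star (scale x E)) (scale x (star E)).
Proof. by case: hstar => _ h *; apply: h. Qed.

Lemma star_submod E : Fbar D E -> submodule D (star E).
Proof. by move/star_Fbar; case. Qed.

Lemma star1 : star D 1.
Proof. by apply: star_ext; [exact: Fbar_self|exact: (subring1 hD)]. Qed.

Lemma star_contains_D G : Fbar D G -> star G 1 -> subset D (star G).
Proof.
move=> FG G1 r Dr; rewrite -[r]mulr1; have [_ _ Sm] := star_submod FG.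
exact: Sm.
Qed.

Lemma star_sub_star G E : Fbar D G -> Fbar D E -> subset G (star E) -> subset (star G) (star E).
Proof.
move=> FG FE GE x /(star_mono FG (star_Fbar FE) GE) h; exact: (proj1 (star_idem FE x) h).
Qed.

Lemma sub_starD G : Fbar D G -> subset G D -> star G 1 -> seteq (star G) (star D).
Proof.
move=> FG GD G1 x; split.
  by apply: star_mono => //; exact: Fbar_self.
apply: star_sub_star => //; first exact: Fbar_self.
exact: star_contains_D.
Qed.

Lemma Fbar_scale b E : b != 0 -> Fbar D E -> Fbar D (scale b E).
Proof.
move=> b0 [[E0 Eadd Emul] [e [e0 Ee]]]; split.
  split.
  - by exists 0; rewrite mulr0.
  - by move=> ? ? [u [Eu ->]] [v [Ev ->]]; exists (u + v); rewrite mulrDr; split => //; apply: Eadd.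
  - by move=> r ? Dr [u [Eu ->]]; exists (r * u); rewrite mulrCA; split => //; apply: Emul.
by exists (b * e); split; [rewrite mulf_neq0|exists e].
Qed.

Lemma star_f_sub E : Fbar D E -> subset (star_f D star E) (star E).
Proof.
move=> FE x [G [fG GE Gx]]; apply: (star_mono (fgen_Fbar hD fG) FE GE Gx).
Qed.

End Star.


Section Fwd.
Variable K : fieldType.
Implicit Types (A B C E F G R T Q : kset K) (x y : K).

Lemma prime_not1 T Q : is_prime T Q -> submodule T Q -> ~ Q 1.
Proof.
move=> [[x [Tx nQx]] _] [_ _ Qm] Q1; apply: nQx; rewrite -[x]mulr1; exact: Qm.
Qed.

Lemma fgen_ext R T G : is_subring R -> is_subring T -> subset R T -> fgen R G -> fgen T (mulset G T).
Proof.
move=> hR hT RT [[s hs] [g [g0 Gg]]]; split; last first.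
  by exists g; split => //; rewrite -[g]mulr1; apply: mulset1 => //; exact: (subring1 hT).
exists s => x; split.
  apply: mulset_sub; [exact: mulset0|exact: mulsetD|] => u t /hs Gu Tt.
  have [_ _ Sm] := span_submod s hT; rewrite mulrC; apply: Sm => //.
  exact: span_ringmono Gu.
apply: mulset_mono => // y ys; apply/hs; apply: span_gen => //; exact: (subring1 hR).
Qed.

Lemma mulset_in_ideal T Q G : submodule T Q -> subset G Q -> subset (mulset G T) Q.
Proof.
move=> [Q0 Qa Qm] GQ; apply: mulset_sub => // a b Ga Tb.
by rewrite mulrC; apply: Qm => //; apply: GQ.
Qed.

Variables (D : kset K) (star : kset K -> kset K).
Hypotheses (hD : is_subring D) (hK : is_quotient_field D) (hstar : semistar D star).

Lemma FFinv_sub_D F : subset (mulset F (colon D F)) D.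
Proof.
apply: mulset_sub; [exact: (subring0 hD)|exact: (subringD hD)|].
by move=> a b Fa Cb; rewrite mulrC; apply: Cb.
Qed.

Lemma pmd_G F : PstarMD D star -> fgen D F ->
  exists G, [/\ fgen D G, subset G (mulset F (colon D F)), star G 1 & seteq (star G) (star D)].
Proof.
move=> pmd fF; have := proj2 (pmd F fF 1) (star1 hD hstar).
case=> G [fG GI G1]; exists G; split => //.
apply: (sub_starD hD hstar (fgen_Fbar hD fG)) => // x /GI; exact: FFinv_sub_D.
Qed.

Lemma fwd_loc T star' : PstarMD D star -> overring D T -> star' T 1 ->
  linked D star T star' -> forall Q, quasi_prime T (star_f T star') Q ->
  seteq (loc D (fun x => Q x /\ D x)) (loc T Q).
Proof.
move=> pmd [hT DT] T1 lk Q [[[QT [[Q0 Qa Qm] Qnz]] Qq] Qp].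
have nQ1 : ~ Q 1 by apply: (prime_not1 Qp).
have [_ Qprime] := Qp.
have key : forall a b, D a -> D b -> b != 0 ->
    exists g, [/\ D (a * g), D (b * g) & ~ Q (a * g) \/ ~ Q (b * g)].
  move=> a b Da Db b0; set F := span D [:: a; b].
  have fF : fgen D F by apply: (span_fgen (y := b)) => //; rewrite !inE eqxx orbT.
  have [G [fG GI G1 GD]] := pmd_G pmd fF.
  have GsubD : subset G D by move=> x /GI; exact: FFinv_sub_D.
  have : ~ subset G Q.
    move=> GQ; apply: nQ1; apply/Qq; split; last exact: (subring1 hT).
    exists (mulset G T); split.
    - exact: (fgen_ext hD hT DT fG).
    - by apply: mulset_in_ideal; first split.
    - apply/(lk G fG GsubD GD); exact: T1.
  move=> nGQ; have [z [Gz nQz]] : exists z, G z /\ ~ Q z.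
    by apply: NNPP => h; apply: nGQ => z Gz; apply: NNPP => nz; apply: h; exists z.
  have [f [g [Ff Cg nQfg]]] := mulset_out Q0 Qa (GI z Gz) nQz.
  have C0 : (fun f => Q (f * g)) 0 by rewrite /= mul0r.
  have Ca : forall u v, Q (u * g) -> Q (v * g) -> Q ((u + v) * g).
    by move=> u v hu hv; rewrite mulrDl; apply: Qa.
  have [y [r [ys Dr nQ]]] := mulset_out C0 Ca Ff nQfg.
  have nQyg : ~ Q (y * g).
    move=> Qyg; apply: nQ; rewrite /= -mulrA mulrCA; apply: Qm => //; exact: DT.
  exists g; split.
  - by rewrite mulrC; apply: Cg; apply: span_gen; [exact: (subring1 hD)|rewrite inE eqxx].
  - by rewrite mulrC; apply: Cg; apply: span_gen; [exact: (subring1 hD)|rewrite !inE eqxx orbT].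
  - by move: ys; rewrite !inE => /orP [] /eqP <-; [left|right].
move=> x; split.
  case=> a [s [Da Ds nQs ->]]; exists a, s; split => //; [exact: DT|exact: DT|].
  by move=> Qs; apply: nQs.
case=> t [u [Tt Tu nQu ->]].
have DQ1 : ~ (Q 1 /\ D 1) by case.
case: (boolP (t == 0)) => [/eqP -> | t0].
  exists 0, 1; split; [exact: (subring0 hD)|exact: (subring1 hD)|exact: DQ1|by rewrite !mul0r].
have u0 : u != 0 by apply/eqP => u0; apply: nQu; rewrite u0.
have [a [b [Da Db b0 hab]]] := hK (t / u).
have a0 : a != 0 by apply/eqP => a0; move: hab; rewrite a0 mul0r => /eqP; rewrite mulf_eq0 invr_eq0 (negPf t0) (negPf u0).
have [g [Dag Dbg hg]] := key a b Da Db b0.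
have tb : t * b = u * a.
  by apply: (mulIf (invr_neq0 b0)); rewrite -mulrA divff // mulr1 -mulrA -hab mulrCA divff // mulr1.
case: (classic (Q (b * g))) => Qbg.
  exfalso; have [nQag|//] : ~ Q (a * g) \/ ~ Q (b * g) by [].
  have : Q (u * (a * g)).
    by rewrite mulrA -tb -mulrA; apply: Qm => //.
  by case/(Qprime _ _ Tu (DT _ Dag)).
exists (a * g), (b * g); split => //; first by case.
have g0 : g != 0 by apply/eqP => g0; apply: Qbg; rewrite g0 mulr0.
by rewrite hab -mulf_div divff // mulr1.
Qed.

End Fwd.


Section Kap.
Variable K : fieldType.
Variables (V J : kset K).
Hypotheses (hV : is_subring V) (J0 : J 0) (Jadd : forall x y, J x -> J y -> J (x + y))
  (Jmul : forall v j, V v -> J j -> J (v * j)) (JV : forall j, J j -> V j) (nJ1 : ~ J 1).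

Definition Jpoly (p : {poly K}) := forall i, J p`_i.

Lemma JN j : J j -> J (- j).
Proof. by move=> Jj; rewrite -mulN1r; apply: Jmul => //; apply: subringN (subring1 hV). Qed.

Lemma Jpoly0 : Jpoly 0. Proof. by move=> i; rewrite coef0. Qed.
Lemma JpolyD p q : Jpoly p -> Jpoly q -> Jpoly (p + q).
Proof. by move=> hp hq i; rewrite coefD; apply: Jadd. Qed.
Lemma JpolyN p : Jpoly p -> Jpoly (- p).
Proof. by move=> hp i; rewrite coefN; apply: JN. Qed.
Lemma JpolyZ c p : V c -> Jpoly p -> Jpoly (c *: p).
Proof. by move=> Vc hp i; rewrite coefZ; apply: Jmul. Qed.
Lemma JpolyC c : J c -> Jpoly c%:P.
Proof. by move=> Jc i; rewrite coefC; case: eqP. Qed.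
Lemma JpolyXn c k : J c -> Jpoly (c *: 'X^k).
Proof. by move=> Jc i; rewrite coefZ coefXn; case: eqP => _; rewrite ?mulr1 ?mulr0. Qed.
Lemma Jpoly_sum (I : Type) (r : seq I) (P : pred I) (F : I -> {poly K}) :
  (forall i, P i -> Jpoly (F i)) -> Jpoly (\sum_(i <- r | P i) F i).
Proof. by move=> h; apply: big_ind => //; [exact: Jpoly0|exact: JpolyD]. Qed.

Lemma reduce (x : K) (p q : {poly K}) : x != 0 -> Jpoly p -> Jpoly q ->
  p.[x] = 1 -> q.[x^-1] = 1 -> (2 <= size q)%N -> (size q <= size p)%N ->
  exists p', [/\ Jpoly p', p'.[x] = 1 & (size p' < size p)%N].
Proof.
move=> x0 Jp Jq hp hq sq sqp.
set m := (size q).-1; set n := (size p).-1.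
have hsq : size q = m.+1 by rewrite /m; case: (size q) sq.
have hsp : size p = n.+1 by rewrite /n; case: (size p) sqp sq => //; case: (size q).
have m1 : (1 <= m)%N by rewrite /m; case: (size q) sq => // [[]].
have mn : (m <= n)%N by rewrite -ltnS -hsq -hsp.
set q0 := q`_0; set a := p`_n.
set S := \sum_(1 <= j < m.+1) q`_j *: 'X^(n - j).
exists ((1 - q0) *: (p - a *: 'X^n) + q0%:P + a *: S); split.
- apply: JpolyD; first apply: JpolyD.
  + apply: JpolyZ; first exact: (subringB hV (subring1 hV) (JV (Jq 0))).
    by apply: JpolyD => //; apply: JpolyN; apply: JpolyXn; apply: Jp.
  + by apply: JpolyC; apply: Jq.
  + apply: JpolyZ; first exact: (JV (Jp _)).
    by apply: Jpoly_sum => j _; apply: JpolyXn; apply: Jq.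
- have hsum : \sum_(1 <= j < m.+1) q`_j * x^-1 ^+ j = 1 - q0.
    move: hq; rewrite horner_coef hsq -(big_mkord xpredT (fun i => q`_i * x^-1 ^+ i)).
    rewrite (big_ltn (ltn0Sn _)) /= expr0 mulr1 => <-.
    by rewrite [q0 + _]addrC addrK.
  have hS : S.[x] = x ^+ n * (1 - q0).
    rewrite /S horner_sum -hsum mulr_sumr; apply: eq_big_nat => j /andP [j1 jm].
    rewrite hornerZ hornerXn exprB ?unitfE //; last by rewrite -ltnS (leq_trans jm) // ltnS.
    by rewrite exprVn mulrCA.
  rewrite !hornerE hS hp /=; ring.
- rewrite hsp ltnS; apply/leq_sizeP => i ni.
  rewrite !coefD !coefZ coefB coefZ coefXn coefC coef_sum.
  have -> : p`_i - a * (i == n)%:R = 0.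
    case: (eqVneq i n) => [->|ne]; first by rewrite mulr1 subrr.
    by rewrite mulr0 subr0; apply: nth_default; rewrite hsp ltn_neqAle eq_sym ne ni.
  rewrite mulr0 add0r.
  have n1 : (1 <= n)%N := leq_trans m1 mn.
  have -> : (i == 0%N) = false by apply/negbTE; rewrite -lt0n (leq_trans n1 ni).
  rewrite add0r big1_seq ?mulr0 // => j /andP [_]; rewrite mem_index_iota => /andP [j1 jm].
  rewrite coefZ coefXn; case: eqP => [eij|]; last by rewrite mulr0.
  by exfalso; move: ni; rewrite eij leqNgt ltn_subrL j1 n1.
Qed.

Lemma kaplansky (x : K) (p q : {poly K}) : x != 0 -> Jpoly p -> Jpoly q ->
  p.[x] = 1 -> q.[x^-1] = 1 -> False.
Proof.
move=> x0 Jp Jq hp hq.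
have [N leN] : exists N, (size p + size q <= N)%N by exists (size p + size q).
elim: N x p q x0 Jp Jq hp hq leN => [|N IH] x p q x0 Jp Jq hp hq leN.
  move: leN; rewrite leqn0 addn_eq0 => /andP [/eqP sp _].
  move: sp => /eqP; rewrite size_poly_eq0 => /eqP sp.
  by move: hp; rewrite sp horner0 => /eqP; rewrite eq_sym oner_eq0.
have const r y : Jpoly r -> r.[y] = 1 -> (size r <= 1)%N -> False.
  move=> Jr hr sr; apply: nJ1; move: hr; rewrite (size1_polyC sr) hornerC => <-; exact: Jr.
case: (leqP (size q) 1) => sq; first exact: (const q x^-1).
case: (leqP (size p) 1) => sp; first exact: (const p x).
case: (leqP (size q) (size p)) => sqp.
  have [p' [Jp' hp' sp']] := reduce x0 Jp Jq hp hq sq sqp.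
  apply: (IH x p' q) => //; rewrite -ltnS (leq_trans _ leN) // ltn_add2r; exact: sp'.
have hp' : p.[x^-1^-1] = 1 by rewrite invrK.
have [q' [Jq' hq' sq']] := reduce (invr_neq0 x0) Jq Jp hq hp' sp (ltnW sqp).
apply: (IH x p q') => //; rewrite -ltnS (leq_trans _ leN) // ltn_add2l; exact: sq'.
Qed.

End Kap.


Section Chain.
Variable K : fieldType.
Lemma chain_list (F : kset K -> Prop) :
  (forall X Y, F X -> F Y -> (forall x, X x -> Y x) \/ (forall x, Y x -> X x)) ->
  (exists X, F X) ->
  forall s : seq K, (forall y, y \in s -> exists X, F X /\ X y) ->
  exists X, F X /\ forall y, y \in s -> X y.
Proof.
move=> tot [X0 FX0]; elim=> [|y s IH] hs; first by exists X0.
have [X1 [FX1 X1y]] := hs y (mem_head _ _).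
have [X2 [FX2 X2s]] : exists X, F X /\ forall z, z \in s -> X z.
  by apply: IH => z zs; apply: hs; rewrite in_cons zs orbT.
case: (tot _ _ FX1 FX2) => h.
  exists X2; split => // z; rewrite in_cons => /orP [/eqP ->|]; [exact: h|exact: X2s].
exists X1; split => // z; rewrite in_cons => /orP [/eqP ->|zs] //; exact/h/X2s.
Qed.
End Chain.

Section Chev.
Variable K : fieldType.
Implicit Types (A B C E F G R T Q : kset K) (x y : K).
Variables (D P : kset K).
Hypotheses (hD : is_subring D) (PD : subset P D) (hP : submodule D P) (Pp : is_prime D P).

Lemma Pnot1 : ~ P 1.
Proof. by case: Pp => [[x [Dx nPx]] _] P1; apply: nPx; rewrite -[x]mulr1; case: hP => _ _; apply. Qed.

Lemma P0 : P 0. Proof. by case: hP. Qed.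

Lemma notP_nz s : ~ P s -> s != 0.
Proof. by move=> nPs; apply/eqP => s0; apply: nPs; rewrite s0; exact: P0. Qed.

Lemma notP_mul s t : D s -> D t -> ~ P s -> ~ P t -> ~ P (s * t).
Proof. by move=> Ds Dt ns nt /(proj2 Pp _ _ Ds Dt) []. Qed.

Lemma loc_subring : is_subring (loc D P).
Proof.
have D1 := subring1 hD; have nP1 := Pnot1.
split.
- by exists 0, 1; rewrite mul0r; split => //; exact: (subring0 hD).
- by exists 1, 1; rewrite divr1; split.
- move=> _ _ [a [s [Da Ds ns ->]]] [b [t [Db Dt nt ->]]].
  exists (a * t + b * s), (s * t); split.
  + by apply: (subringD hD); apply: (subringM hD).
  + exact: (subringM hD).
  + exact: notP_mul.
  + by rewrite addf_div //; apply: notP_nz.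
- move=> _ [a [s [Da Ds ns ->]]]; exists (- a), s; split => //; last by rewrite mulNr.
  exact: (subringN hD).
- move=> _ _ [a [s [Da Ds ns ->]]] [b [t [Db Dt nt ->]]].
  exists (a * b), (s * t); split; [exact: (subringM hD)|exact: (subringM hD)|exact: notP_mul|].
  by rewrite mulf_div.
Qed.

Lemma D_sub_loc : subset D (loc D P).
Proof. by move=> x Dx; exists x, 1; rewrite divr1; split => //; [exact: (subring1 hD)|exact: Pnot1]. Qed.

Lemma not1_loc : ~ mulset P (loc D P) 1.
Proof.
move=> m1.
have : (fun z => exists p s, [/\ P p, D s, ~ P s & z = p / s]) 1.
  apply: (@mulset_sub K P (loc D P) (fun z => exists p s, [/\ P p, D s, ~ P s & z = p / s]) _ _ _ 1 m1).
  - by exists 0, 1; rewrite mul0r; split => //; [exact: P0|exact: (subring1 hD)|exact: Pnot1].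
  - move=> _ _ [p [s [Pp' Ds ns ->]]] [q [t [Pq Dt nt ->]]].
    exists (p * t + q * s), (s * t); split; [|exact: (subringM hD)|exact: notP_mul|].
      by case: hP => _ Pa Pm; apply: Pa; rewrite mulrC; apply: Pm.
    by rewrite addf_div //; apply: notP_nz.
  - move=> p _ Pp' [a [s [Da Ds ns ->]]]; exists (p * a), s; split => //; last by rewrite mulrA.
    by case: hP => _ _ Pm; rewrite mulrC; apply: Pm.
case=> p [s [Pp' Ds ns e]]; have s0 := notP_nz ns; apply: ns.
by have -> : s = p by apply: (mulIf (invr_neq0 s0)); rewrite divff // e.
Qed.

Definition fam R := [/\ is_subring R, subset (loc D P) R & ~ mulset P R 1].

Section Adj.
Variable A : kset K.
Hypothesis hA : is_subring A.

Definition adj y : kset K := fun z => exists p : {poly K}, (forall i, A p`_i) /\ z = p.[y].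

Lemma Asum (I : Type) (r : seq I) (Pr : pred I) (Fn : I -> K) :
  (forall i, Pr i -> A (Fn i)) -> A (\sum_(i <- r | Pr i) Fn i).
Proof. by move=> h; apply: big_ind => //; [exact: (subring0 hA)|exact: (subringD hA)]. Qed.

Lemma adj_subring y : is_subring (adj y).
Proof.
split.
- by exists 0; rewrite horner0; split => // i; rewrite coef0; exact: (subring0 hA).
- exists 1; rewrite hornerC; split => // i; rewrite coef1.
  by case: (i == 0)%N; [exact: (subring1 hA)|exact: (subring0 hA)].
- move=> _ _ [p [hp ->]] [q [hq ->]]; exists (p + q); rewrite hornerD; split => // i.
  by rewrite coefD; apply: (subringD hA).
- move=> _ [p [hp ->]]; exists (- p); rewrite hornerN; split => // i.
  by rewrite coefN; apply: (subringN hA).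
- move=> _ _ [p [hp ->]] [q [hq ->]]; exists (p * q); rewrite hornerM; split => // i.
  by rewrite coefM; apply: Asum => j _; apply: (subringM hA).
Qed.

Lemma adj_sub y : subset A (adj y).
Proof.
move=> a Aa; exists a%:P; rewrite hornerC; split => // i; rewrite coefC.
by case: (i == 0)%N => //; exact: (subring0 hA).
Qed.

Lemma adj_gen y : adj y y.
Proof.
exists 'X; rewrite hornerX; split => // i; rewrite coefX.
by case: (i == 1)%N; [exact: (subring1 hA)|exact: (subring0 hA)].
Qed.

Lemma adj_J y : mulset P (adj y) 1 ->
  exists p : {poly K}, Jpoly (mulset P A) p /\ p.[y] = 1.
Proof.
move=> m1.
have : (fun z => exists p : {poly K}, Jpoly (mulset P A) p /\ z = p.[y]) 1.
  apply: (@mulset_sub K P (adj y) (fun z => exists p : {poly K}, Jpoly (mulset P A) p /\ z = p.[y]) _ _ _ 1 m1).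
  - by exists 0; rewrite horner0; split => // i; rewrite coef0; exact: mulset0.
  - move=> _ _ [p [hp ->]] [q [hq ->]]; exists (p + q); rewrite hornerD; split => // i.
    by rewrite coefD; apply: mulsetD.
  - move=> a _ Pa [q [hq ->]]; exists (a *: q); rewrite hornerZ; split => // i.
    by rewrite coefZ; apply: mulset1.
by case=> p [hp e]; exists p.
Qed.

End Adj.

Lemma chevalley : exists V, fam V /\ forall x, x != 0 -> V x \/ V x^-1.
Proof.
pose Pz X := (forall x, ~ X x) \/ fam X.
have famne X : Pz X -> forall y, X y -> fam X.
  by move=> [h|//] y Xy; exfalso; exact: (h y).
have [A [PA Amax]] : exists A, Pz A /\ forall B, Pz B -> (forall x, A x -> B x) -> forall x, B x -> A x.
  apply: zorn_wrap => F FP tot.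
  case: (classic (exists X y, F X /\ X y)) => [[X0 [y0 [FX0 X0y0]]]|hne]; last first.
    by left => x [X [FX Xx]]; apply: hne; exists X, x.
  right.
  have fm X y : F X -> X y -> fam X by move=> FX; apply: famne; exact: FP.
  have two : forall a b, (exists X, F X /\ X a) -> (exists X, F X /\ X b) ->
      exists X, [/\ F X, fam X, X a & X b].
    move=> a b [X [FX Xa]] [Y [FY Yb]]; case: (tot _ _ FX FY) => h.
      by exists Y; split => //; [exact: (fm Y b)|exact: h].
    by exists X; split => //; [exact: (fm X a)|exact: h].
  have [sX0 lX0 _] := fm _ _ FX0 X0y0.
  split.
  - split.
    + by exists X0; split => //; exact: (subring0 sX0).
    + by exists X0; split => //; exact: (subring1 sX0).
    + move=> a b ha hb; have [X [FX [sX _ _] Xa Xb]] := two a b ha hb.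
      by exists X; split => //; apply: (subringD sX).
    + move=> a [X [FX Xa]]; have [sX _ _] := fm X a FX Xa.
      by exists X; split => //; apply: (subringN sX).
    + move=> a b ha hb; have [X [FX [sX _ _] Xa Xb]] := two a b ha hb.
      by exists X; split => //; apply: (subringM sX).
  - by move=> x lx; exists X0; split => //; apply: lX0.
  - move=> [s [hs e]].
    have [X [FX Xs]] : exists X, F X /\ forall y, y \in 0 :: map snd s -> X y.
      apply: chain_list => //; first by exists X0.
      move=> y; rewrite in_cons => /orP [/eqP ->|].
        by exists X0; split => //; exact: (subring0 sX0).
      by move=> /mapP [pr prs ->]; have [_ h] := hs pr prs; exact: h.
    have [_ _ nX] := fm X 0 FX (Xs 0 (mem_head _ _)).
    apply: nX; exists s; split => // pr prs; split; first by have [] := hs pr prs.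
    by apply: Xs; rewrite in_cons map_f ?orbT.
have fA : fam A.
  case: PA => // hA; exfalso.
  have floc : fam (loc D P) by split; [exact: loc_subring|by []|exact: not1_loc].
  have := Amax (loc D P) (or_intror floc) (fun x Ax => False_ind _ (hA x Ax)) 0.
  by move=> h; apply: (hA 0); apply: h; exact: (subring0 loc_subring).
exists A; split => // x x0; apply: NNPP => hx.
have nAx : ~ A x by move=> h; apply: hx; left.
have nAxi : ~ A x^-1 by move=> h; apply: hx; right.
have [sA lA nA] := fA.
have step y : ~ A y -> exists p : {poly K}, Jpoly (mulset P A) p /\ p.[y] = 1.
  move=> nAy; apply: adj_J => //; apply: NNPP => nm.
  have fy : fam (adj A y).
    split; [exact: adj_subring|move=> z /lA; exact: adj_sub|exact: nm].
  by apply: nAy; exact: (Amax (adj A y) (or_intror fy) (@adj_sub A sA y) y (adj_gen sA y)).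
have [p [Jp hp]] := step x nAx.
have [q [Jq hq]] := step _ nAxi.
have PA' : subset P A by move=> z /PD /D_sub_loc /lA.
apply: (kaplansky (V := A) (J := mulset P A) _ _ _ _ _ _ x0 Jp Jq hp hq) => //.
- exact: mulset0.
- exact: mulsetD.
- move=> v j Av mj; apply: (@mulset_sub K P A (fun z => mulset P A (v * z)) _ _ _ j mj).
  + by rewrite mulr0; exact: mulset0.
  + by move=> a b ha hb; rewrite mulrDr; exact: mulsetD.
  + by move=> a b Pa Ab; rewrite mulrCA; apply: mulset1 => //; apply: (subringM sA).
- move=> j mj; apply: (@mulset_sub K P A A _ _ _ j mj).
  + exact: (subring0 sA).
  + exact: (subringD sA).
  + by move=> a b Pa Ab; apply: (subringM sA) => //; apply: PA'.
Qed.

End Chev.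


Section QPrime.
Variable K : fieldType.
Implicit Types (A B C E F G R T Q : kset K) (x y : K).
Variables (D : kset K) (star : kset K -> kset K).
Hypotheses (hD : is_subring D) (hstar : semistar D star).
Variable I : kset K.
Hypotheses (ID : subset I D) (hI : submodule D I) (Inz : nonzero I) (nI1 : ~ star_f D star I 1).

Definition phi J := [/\ subset I J, subset J D, submodule D J & ~ star_f D star J 1].

Lemma span_add l m y r : D r -> m \in l -> y \in l -> span D l (m + y * r).
Proof.
move=> Dr ml yl; apply: mulsetD; first by apply: span_gen => //; exact: (subring1 hD).
exact: mulset1.
Qed.

Lemma quasi_prime_exists : exists M, quasi_prime D (star_f D star) M /\ subset I M.
Proof.
have D1 := subring1 hD.
pose Pz X := (forall x, ~ X x) \/ phi X.
have phine X : Pz X -> forall y, X y -> phi X.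
  by move=> [h|//] y Xy; exfalso; exact: (h y).
have [M [PM Mmax]] : exists A, Pz A /\ forall B, Pz B -> (forall x, A x -> B x) -> forall x, B x -> A x.
  apply: zorn_wrap => F FP tot.
  case: (classic (exists X y, F X /\ X y)) => [[X0 [y0 [FX0 X0y0]]]|hne]; last first.
    by left => x [X [FX Xx]]; apply: hne; exists X, x.
  right.
  have fm X y : F X -> X y -> phi X by move=> FX; apply: phine; exact: FP.
  have two : forall a b, (exists X, F X /\ X a) -> (exists X, F X /\ X b) ->
      exists X, [/\ F X, phi X, X a & X b].
    move=> a b [X [FX Xa]] [Y [FY Yb]]; case: (tot _ _ FX FY) => h.
      by exists Y; split => //; [exact: (fm Y b)|exact: h].
    by exists X; split => //; [exact: (fm X a)|exact: h].
  have [IX0 X0D [X00 _ _] _] := fm _ _ FX0 X0y0.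
  split.
  - by move=> x Ix; exists X0; split => //; apply: IX0.
  - by move=> x [X [FX Xx]]; have [_ XD _ _] := fm X x FX Xx; apply: XD.
  - split.
    + by exists X0.
    + move=> a b ha hb; have [X [FX [_ _ [_ Xa _] _] Xa' Xb]] := two a b ha hb.
      by exists X; split => //; apply: Xa.
    + move=> r a Dr [X [FX Xa]]; have [_ _ [_ _ Xm] _] := fm X a FX Xa.
      by exists X; split => //; apply: Xm.
  - move=> [G [fG GU G1]]; have [s [hs _]] := fgen_span fG.
    have [X [FX Xs]] : exists X, F X /\ forall y, y \in 0 :: s -> X y.
      apply: chain_list => //; first by exists X0.
      move=> y; rewrite in_cons => /orP [/eqP ->|ys]; first by exists X0.
      by apply: GU; apply/hs; apply: span_gen.
    have [_ _ sX nX] := fm X 0 FX (Xs 0 (mem_head _ _)).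
    apply: nX; exists G; split => // x /hs; apply: span_in_submod => // y ys.
    by apply: Xs; rewrite in_cons ys orbT.
have [Mi MD [M0 Madd Mmul] nM1] : phi M.
  case: PM => // hM; exfalso.
  have phiI : phi I by split.
  have [i [i0 Ii]] := Inz.
  by apply: (hM i); apply: (Mmax I (or_intror phiI) (fun x Mx => False_ind _ (hM x Mx))).
have Mmax' B : phi B -> subset M B -> subset B M.
  by move=> pB MB; apply: (Mmax B (or_intror pB) MB).
have nMnz y : ~ M y -> y != 0 by move=> nMy; apply/eqP => y0; apply: nMy; rewrite y0.
have fgsp l y : y \in l -> y != 0 -> fgen D (span D l).
  by move=> yl y0; exact: (span_fgen (y := y)).
have Fsp l y : y \in l -> y != 0 -> Fbar D (span D l).
  by move=> yl y0; apply: (fgen_Fbar hD); exact: (fgsp l y).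
have KL y : D y -> ~ M y -> exists ms : seq K, (forall m, m \in ms -> M m) /\ star (span D (y :: ms)) 1.
  move=> Dy nMy.
  pose B z := exists m r, [/\ M m, D r & z = m + y * r].
  have nphiB : ~ phi B.
    move=> pB; apply: nMy; apply: (Mmax' B pB).
      by move=> z Mz; exists z, 0; split => //; [exact: (subring0 hD)|rewrite mulr0 addr0].
    by exists 0, 1; split => //; rewrite mulr1 add0r.
  have sB : star_f D star B 1.
    apply: NNPP => nB; apply: nphiB; split.
    - by move=> z Iz; exists z, 0; split => //; [exact: Mi|exact: (subring0 hD)|rewrite mulr0 addr0].
    - by move=> _ [m [r [Mm Dr ->]]]; apply: (subringD hD); [exact: MD|exact: (subringM hD)].
    - split.
      + by exists 0, 0; split => //; [exact: (subring0 hD)|rewrite mulr0 addr0].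
      + move=> _ _ [m [r [Mm Dr ->]]] [m' [r' [Mm' Dr' ->]]].
        exists (m + m'), (r + r'); split; [exact: Madd|exact: (subringD hD)|].
        by rewrite mulrDr addrACA.
      + move=> d _ Dd [m [r [Mm Dr ->]]]; exists (d * m), (d * r); split.
        * exact: Mmul.
        * exact: (subringM hD).
        * by rewrite mulrDr mulrCA.
    - exact: nB.
  have [G [fG GB G1]] := sB.
  have [s [hs _]] := fgen_span fG.
  have sBz : forall z, z \in s -> B z by move=> z zs; apply: GB; apply/hs; apply: span_gen.
  have [ms [hms sms]] : exists ms : seq K, (forall m, m \in ms -> M m) /\
      forall z, z \in s -> span D (y :: ms) z.
    elim: s {hs} sBz => [|z s IH] hz; first by exists [::].
    have [ms [hms sms]] := IH (fun w ws => hz w (ltac:(by rewrite in_cons ws orbT))).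
    have [m [r [Mm Dr ez]]] := hz z (mem_head _ _).
    exists (m :: ms); split.
      by move=> w; rewrite in_cons => /orP [/eqP ->|]; [|apply: hms].
    move=> w; rewrite in_cons => /orP [/eqP ->|ws].
      by rewrite ez; apply: span_add Dr _ _; rewrite !inE eqxx ?orbT.
    apply: (span_mono D1 _ (sms w ws)) => v; rewrite !inE => /orP [->|->]; rewrite ?orbT //.
  exists ms; split => //.
  have h := star_mono hstar (fgen_Fbar hD fG) (Fsp _ y (mem_head _ _) (nMnz y nMy)). apply: h G1.
  move=> x /hs; apply: span_in_submod => //; exact: span_submod.
have [i0 [i0nz Ii0]] := Inz.
have Mi0 := Mi _ Ii0.
have Fst C : Fbar D C -> Fbar D (star C) by apply: star_Fbar.
have sext C : Fbar D C -> subset C (star C) by apply: star_ext.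
exists M; split => //; split; last first.
  split.
    exists 1; split => // M1; apply: nM1; exists (span D [:: 1]); split.
    - exact: (fgsp _ 1 (mem_head _ _) (oner_neq0 _)).
    - by apply: span_in_submod => // y; rewrite inE => /eqP ->.
    - by apply: (sext _ (Fsp _ 1 (mem_head _ _) (oner_neq0 _))); apply: span_gen; rewrite ?inE.
  move=> a b Da Db Mab; apply: NNPP => hab.
  have nMa : ~ M a by move=> h; apply: hab; left.
  have nMb : ~ M b by move=> h; apply: hab; right.
  have [msa [hmsa sa]] := KL a Da nMa.
  have [msb [hmsb sb]] := KL b Db nMb.
  have a0 := nMnz a nMa; have b0 := nMnz b nMb.
  set C := span D ([seq b * z | z <- a :: msa] ++ msb).
  have ba_in : b * a \in [seq b * z | z <- a :: msa] ++ msb by rewrite mem_cat map_f ?mem_head.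
  have FC : Fbar D C by apply: (Fsp _ (b * a) ba_in); rewrite mulf_neq0.
  have CM : subset C M.
    apply: span_in_submod => // z; rewrite mem_cat => /orP [/mapP [w ws ->]|zs]; last exact: hmsb.
    move: ws; rewrite in_cons => /orP [/eqP ->|ws]; first by rewrite mulrC.
    by apply: Mmul => //; apply: hmsa.
  have FA : Fbar D (span D (a :: msa)) by apply: (Fsp _ a (mem_head _ _) a0).
  have scC : subset (scale b (span D (a :: msa))) C.
    move=> _ [e [He ->]].
    apply: (@mulset_sub K _ D (fun e => C (b * e)) _ _ _ e He).
    - by rewrite mulr0; exact: mulset0.
    - by move=> u v hu hv; rewrite mulrDr; exact: mulsetD.
    - move=> w r ws Dr; rewrite mulrA; apply: mulset1 => //.
      by rewrite mem_cat map_f.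
  have bC : star C b.
    have : scale b (star (span D (a :: msa))) b by exists 1; rewrite mulr1.
    move/(proj2 (star_scale hstar b0 FA b)).
    exact: (star_mono hstar (Fbar_scale b0 FA) FC scC).
  have spC : subset (span D (b :: msb)) (star C).
    apply: span_in_submod; first by case: (Fst C FC).
    move=> z; rewrite in_cons => /orP [/eqP ->|zs] //.
    by apply: (sext _ FC); apply: span_gen => //; rewrite mem_cat zs orbT.
  apply: nM1; exists C; split => //; first by apply: (fgsp _ (b * a) ba_in); rewrite mulf_neq0.
  apply: (star_sub_star hstar (Fsp _ b (mem_head _ _) b0) FC spC); exact: sb.
split.
  split => //; split => //; exists i0; split => //.
move=> x; split; last first.
  move=> Mx; split; last exact: MD.
  have l2 : i0 \in [:: x; i0] by rewrite !inE eqxx orbT.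
  exists (span D [:: x; i0]); split.
  - exact: (fgsp _ i0 l2 i0nz).
  - by apply: span_in_submod => // y; rewrite !inE => /orP [] /eqP ->.
  - by apply: (sext _ (Fsp _ i0 l2 i0nz)); apply: span_gen; rewrite ?inE ?eqxx.
case=> [[H [fH HM Hx]] Dx]; apply: NNPP => nMx.
have [ms [hms sx]] := KL x Dx nMx.
have [hs [hH [h0 hs0 h0nz]]] := fgen_span fH.
set C := span D (ms ++ hs).
have h0C : h0 \in ms ++ hs by rewrite mem_cat hs0 orbT.
have FC : Fbar D C by exact: (Fsp _ h0 h0C h0nz).
have CM : subset C M.
  apply: span_in_submod => // z; rewrite mem_cat => /orP [zs|zs]; first exact: hms.
  by apply: HM; apply/hH; apply: span_gen.
have HC : subset H C.
  by move=> z /hH; apply: span_mono => // w ws; rewrite mem_cat ws orbT.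
have spC : subset (span D (x :: ms)) (star C).
  apply: span_in_submod; first by case: (Fst C FC).
  move=> w; rewrite in_cons => /orP [/eqP ->|ws].
    exact: (star_mono hstar (fgen_Fbar hD fH) FC HC).
  by apply: (sext _ FC); apply: span_gen => //; rewrite mem_cat ws.
apply: nM1; exists C; split => //; first exact: (fgsp _ h0 h0C h0nz).
have x0 := nMnz x nMx.
apply: (star_sub_star hstar (Fsp _ x (mem_head _ _) x0) FC spC); exact: sx.
Qed.

End QPrime.


Section Val.
Variable K : fieldType.
Implicit Types (A B C E F G R T Q : kset K) (x y : K).
Variable V : kset K.
Hypotheses (hV : is_subring V) (val : forall x, x != 0 -> V x \/ V x^-1).

Definition QV : kset K := fun x => V x /\ (x = 0 \/ ~ V x^-1).

Lemma QV_not1 : ~ QV 1.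
Proof. by case=> _ [/eqP|]; [rewrite oner_eq0|rewrite invr1; apply; exact: (subring1 hV)]. Qed.

Lemma QV_submod : submodule V QV.
Proof.
have V1 := subring1 hV.
split.
- by split; [exact: (subring0 hV)|left].
- move=> x y [Vx hx] [Vy hy]; split; first exact: (subringD hV).
  case: (eqVneq x 0) => [->|x0]; first by rewrite add0r.
  case: (eqVneq y 0) => [->|y0]; first by rewrite addr0.
  have nx : ~ V x^-1 by case: hx => // /eqP; rewrite (negPf x0).
  have ny : ~ V y^-1 by case: hy => // /eqP; rewrite (negPf y0).
  case: (eqVneq (x + y) 0) => [->|s0]; first by left.
  right => Vs.
  have yx0 : y / x != 0 by rewrite mulf_neq0 ?invr_eq0.
  case: (val yx0) => h.
    apply: nx; have -> : x^-1 = (1 + y / x) * (x + y)^-1 by field; do ?[apply/andP; split]; rewrite ?mulf_neq0 ?invr_eq0 //.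
    by apply: (subringM hV) => //; apply: (subringD hV).
  apply: ny.
  have yx0' : x / y != 0 by rewrite mulf_neq0 ?invr_eq0.
  have -> : y^-1 = (1 + (y / x)^-1) * (x + y)^-1 by field; do ?[apply/andP; split]; rewrite ?mulf_neq0 ?invr_eq0 //.
  by apply: (subringM hV) => //; apply: (subringD hV).
- move=> r x Vr [Vx hx]; split; first exact: (subringM hV).
  case: (eqVneq x 0) => [->|x0]; first by rewrite mulr0; left.
  case: (eqVneq r 0) => [->|r0]; first by rewrite mul0r; left.
  have nx : ~ V x^-1 by case: hx => // /eqP; rewrite (negPf x0).
  right => h; apply: nx.
  have -> : x^-1 = r * (r * x)^-1 by field; do ?[apply/andP; split]; rewrite ?mulf_neq0 ?invr_eq0 //.
  exact: (subringM hV).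
Qed.


Lemma QV_V : subset QV V. Proof. by move=> x []. Qed.

Lemma QV0 : QV 0. Proof. by split; [exact: (subring0 hV)|left]. Qed.

Lemma notQV_unit x : V x -> ~ QV x -> x != 0 /\ V x^-1.
Proof.
move=> Vx nQ; split; first by apply/eqP => x0; apply: nQ; split => //; left.
by apply: NNPP => h; apply: nQ; split => //; right.
Qed.

Lemma QV_prime : is_prime V QV.
Proof.
split; first by exists 1; split; [exact: (subring1 hV)|exact: QV_not1].
move=> a b Va Vb Qab; apply: NNPP => h.
have [a0 Vai] := notQV_unit Va (fun q => h (or_introl q)).
have [b0 Vbi] := notQV_unit Vb (fun q => h (or_intror q)).
case: Qab => _ [/eqP|]; first by rewrite mulf_eq0 (negPf a0) (negPf b0).
by apply; rewrite invfM; apply: (subringM hV).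
Qed.

Lemma valmax (s : seq K) : (exists2 y, y \in s & y != 0) ->
  exists a, [/\ a \in s, a != 0 & forall y, y \in s -> V (y / a)].
Proof.
elim: s => [[y]//|y s IH] hne.
case: (classic (exists2 z, z \in s & z != 0)) => [hs|hs].
  have [a [as0 a0 ha]] := IH hs.
  case: (eqVneq y 0) => [y0|y0].
    exists a; split => //; first by rewrite in_cons as0 orbT.
    move=> z; rewrite in_cons => /orP [/eqP ->|]; last exact: ha.
    by rewrite y0 mul0r; exact: (subring0 hV).
  have ya0 : y / a != 0 by rewrite mulf_neq0 ?invr_eq0.
  case: (val ya0) => h.
    exists a; split => //; first by rewrite in_cons as0 orbT.
    by move=> z; rewrite in_cons => /orP [/eqP ->|]; last exact: ha.
  exists y; split => //; first exact: mem_head.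
  move=> z; rewrite in_cons => /orP [/eqP ->|zs]; first by rewrite divff //; exact: (subring1 hV).
  have -> : z / y = (z / a) * (y / a)^-1 by field; do ?[apply/andP; split].
  by apply: (subringM hV) => //; apply: ha.
have [y0 ?] : y != 0 /\ True.
  by case: hne => z; rewrite in_cons => /orP [/eqP -> //|zs] z0; exfalso; apply: hs; exists z.
exists y; split => //; first exact: mem_head.
move=> z; rewrite in_cons => /orP [/eqP ->|zs]; first by rewrite divff //; exact: (subring1 hV).
have -> : z = 0 by apply: NNPP => z0; apply: hs; exists z => //; apply/eqP.
by rewrite mul0r; exact: (subring0 hV).
Qed.

Lemma QV_v G x : fgen V G -> subset G QV -> V x -> v_op V G x -> QV x.
Proof.
move=> fG GQ Vx vx.
have [s [hs hne]] := fgen_span fG.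
have [a [as0 a0 ha]] := valmax hne.
have Ga : G a by apply/hs; apply: span_gen => //; exact: (subring1 hV).
have ainv : colon V G a^-1.
  move=> e /hs; apply: (@mulset_sub K _ V (fun e => V (a^-1 * e))).
  - by rewrite mulr0; exact: (subring0 hV).
  - by move=> u v hu hv; rewrite mulrDr; apply: (subringD hV).
  - move=> y r ys Vr; rewrite mulrA [a^-1 * y]mulrC.
    by apply: (subringM hV) => //; apply: ha.
have Vxa := vx _ ainv.
have -> : x = (x * a^-1) * a by rewrite mulfVK.
by case: QV_submod => _ _; apply => //; apply: GQ.
Qed.

Lemma QV_sup (op : kset K -> kset K) :
  (forall G, fgen V G -> subset G (op G)) -> nonzero QV ->
  forall x, QV x -> star_f V op QV x /\ V x.
Proof.
move=> ext [q0 [q0nz Qq0]] x Qx; split; last exact: QV_V.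
have l2 : q0 \in [:: x; q0] by rewrite !inE eqxx orbT.
have fG : fgen V (span V [:: x; q0]) by apply: (span_fgen (y := q0)).
exists (span V [:: x; q0]); split => //.
- apply: span_in_submod; first exact: QV_submod.
  by move=> y; rewrite !inE => /orP [] /eqP ->.
- by apply: ext => //; apply: span_gen; rewrite ?inE ?eqxx //; exact: (subring1 hV).
Qed.

End Val.


Section Final.
Variable K : fieldType.
Implicit Types (A B C E F G R T Q V : kset K) (x y : K).
Variables (D : kset K) (star : kset K -> kset K).
Hypotheses (hD : is_subring D) (hK : is_quotient_field D) (hstar : semistar D star).

Lemma common_den (s : seq K) : exists c, [/\ D c, c != 0 & forall y, y \in s -> D (c * y)].
Proof.
elim: s => [|y s [c [Dc c0 hc]]].
  by exists 1; split => //; [exact: (subring1 hD)|exact: oner_neq0].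
have [a [b [Da Db b0 ->]]] := hK y.
exists (c * b); split; first exact: (subringM hD).
  by rewrite mulf_neq0.
move=> z; rewrite in_cons => /orP [/eqP ->|zs].
  by rewrite mulrAC -mulrA divfK //; apply: (subringM hD).
by rewrite mulrAC; apply: (subringM hD) => //; apply: hc.
Qed.

Lemma FFinv_props F : fgen D F ->
  [/\ subset (mulset F (colon D F)) D, submodule D (mulset F (colon D F))
    & nonzero (mulset F (colon D F))].
Proof.
move=> fF; have [s [hs [f0 f0s f0nz]]] := fgen_span fF.
split; first exact: FFinv_sub_D.
  split; [exact: mulset0|exact: mulsetD|].
  move=> r x Dr mx; apply: (@mulset_sub K F (colon D F) (fun x => mulset F (colon D F) (r * x)) _ _ _ x mx).
  - by rewrite mulr0; exact: mulset0.
  - by move=> u v hu hv; rewrite mulrDr; exact: mulsetD.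
  - move=> a b Fa Cb; rewrite mulrA; apply: mulset1 => //.
    have [_ _ Fm] := submod_seteq (seteq_sym hs) (span_submod s hD).
    exact: Fm.
have [c [Dc c0 hc]] := common_den s.
have Cc : colon D F c.
  move=> e /hs; apply: (@mulset_sub K _ D (fun e => D (c * e))).
  - by rewrite mulr0; exact: (subring0 hD).
  - by move=> u v hu hv; rewrite mulrDr; apply: (subringD hD).
  - by move=> y r ys Dr; rewrite mulrA; apply: (subringM hD) => //; apply: hc.
exists (f0 * c); split; first by rewrite mulf_neq0.
apply: mulset1 => //; apply/hs; apply: span_gen => //; exact: (subring1 hD).
Qed.

Definition valring V := is_subring V /\ forall x, x != 0 -> V x \/ V x^-1.

Lemma contra V F : overring D V -> valring V -> fgen D F ->
  subset (mulset F (colon D F)) (QV V) ->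
  seteq (loc D (fun x => QV V x /\ D x)) (loc V (QV V)) -> False.
Proof.
move=> [_ DV] [hV val] fF IQ hloc.
have V1 := subring1 hV.
have VL : subset V (loc D (fun x => QV V x /\ D x)).
  move=> x Vx; apply/hloc; exists x, 1; split => //; first exact: (QV_not1 hV).
  by rewrite divr1.
have [s [hs hne]] := fgen_span fF.
have [a [as0 a0 ha]] := valmax hV val hne.
have [c [Dc nQc hc]] : exists c, [/\ D c, ~ QV V c & forall y, y \in s -> D (c * (y / a))].
  elim: s {hs hne as0} ha => [|y s IH] ha.
    by exists 1; split => //; [exact: (subring1 hD)|exact: (QV_not1 hV)].
  have [c' [Dc' nQc' hc']] := IH (fun z zs => ha z (ltac:(by rewrite in_cons zs orbT))).
  have [r [t [Dr Dt nQt e]]] := VL _ (ha y (mem_head _ _)).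
  have nQt' : ~ QV V t by move=> q; apply: nQt; split.
  have t0 : t != 0 by apply/eqP => t0; apply: nQt'; rewrite t0; exact: (QV0 hV).
  exists (c' * t); split.
  - exact: (subringM hD).
  - by case/(proj2 (QV_prime hV) _ _ (DV _ Dc') (DV _ Dt)).
  - move=> z; rewrite in_cons => /orP [/eqP ->|zs].
      by rewrite e mulrAC -mulrA divfK //; apply: (subringM hD).
    by rewrite mulrAC; apply: (subringM hD) => //; apply: hc'.
have Cg : colon D F (c / a).
  move=> e /hs; apply: (@mulset_sub K _ D (fun e => D (c / a * e))).
  - by rewrite mulr0; exact: (subring0 hD).
  - by move=> u v hu hv; rewrite mulrDr; apply: (subringD hD).
  - move=> y r ys Dr; have -> : c / a * (y * r) = c * (y / a) * r by ring.
    by apply: (subringM hD) => //; apply: hc.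
have Fa : F a by apply/hs; apply: span_gen => //; exact: (subring1 hD).
apply: nQc; have := IQ _ (mulset1 Fa Cg).
by rewrite mulrC divfK.
Qed.

End Final.


Section Final2.
Variable K : fieldType.
Implicit Types (A B C E F G R T Q V P : kset K) (x y : K).
Variables (D : kset K) (star : kset K -> kset K).
Hypotheses (hD : is_subring D) (hK : is_quotient_field D) (hstar : semistar D star).

Definition Hyp := forall V P, overring D V -> valring V -> quasi_prime D (star_f D star) P ->
  subset (loc D P) V -> ~ mulset P V 1 ->
  seteq (loc D (fun x => QV V x /\ D x)) (loc V (QV V)).

Lemma P_in_QV V P : valring V -> subset P V -> ~ mulset P V 1 -> subset P (QV V).
Proof.
move=> [hV val] PV n1 p Pp; split; first exact: PV.
case: (eqVneq p 0) => [->|p0]; first by left.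
right => Vpi; apply: n1; rewrite -(divff p0); exact: mulset1.
Qed.

Lemma conv : Hyp -> PstarMD D star.
Proof.
move=> H F fF; have [ID hI Inz] := FFinv_props hD hK fF.
set I := mulset F (colon D F).
have FI : Fbar D I by split.
case: (classic (star_f D star I 1)) => h.
  have [G [fG GI G1]] := h.
  have GD : subset G D by move=> x /GI /ID.
  have hG := sub_starD hD hstar (fgen_Fbar hD fG) GD G1.
  move=> x; split.
    move/(star_f_sub hD hstar FI); apply: (star_mono hstar FI (Fbar_self hD) ID).
  by move/hG => Gx; exists G.
have [P [qP IP]] := quasi_prime_exists hD hstar ID hI Inz h.
have [[[PD [hP Pnz]] Pq] Pp] := qP.
have [V [[sV lV nV] val]] := chevalley hD PD hP Pp.
have oV : overring D V by split => // x /(D_sub_loc hD hP Pp) /lV.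
have vV : valring V by [].
exfalso; apply: (@contra K D hD V F oV vV fF).
  move=> x /IP; apply: (P_in_QV vV) => // p /PD /(D_sub_loc hD hP Pp) /lV. done.
exact: (H V P oV vV qP lV nV).
Qed.

Lemma P_avoid P F' : quasi_prime D (star_f D star) P -> fgen D F' -> seteq (star F') (star D) ->
  exists f, F' f /\ ~ P f.
Proof.
move=> [[[PD [hP _]] Pq] Pp] fF hF; apply: NNPP => hn.
apply: (Pnot1 hP Pp); apply/Pq; split; last exact: (subring1 hD).
exists F'; split => //; last by apply/hF; exact: (star1 hD hstar).
by move=> f Ff; apply: NNPP => nPf; apply: hn; exists f.
Qed.

Lemma linked_d V P : overring D V -> quasi_prime D (star_f D star) P -> subset (loc D P) V ->
  linked D star V (@d_op K).
Proof.
move=> [hV DV] qP lV F' fF F'D hF x; rewrite /d_op; split.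
  apply: mulset_sub; [exact: (subring0 hV)|exact: (subringD hV)|].
  by move=> a b Fa Vb; apply: (subringM hV) => //; apply: DV; apply: F'D.
move=> Vx; have [f [Ff nPf]] := P_avoid qP fF hF.
have f0 : f != 0.
  apply/eqP => f0; apply: nPf; rewrite f0; have [[[_ [[P0 _ _] _]] _] _] := qP; exact: P0.
have Vfi : V f^-1.
  apply: lV; exists 1, f; split; [exact: (subring1 hD)|exact: F'D|exact: nPf|by rewrite div1r].
rewrite -(mulVKf f0 x); apply: mulset1 => //; exact: (subringM hV).
Qed.

Lemma linked_t V P : overring D V -> quasi_prime D (star_f D star) P -> subset (loc D P) V ->
  linked D star V (t_op V).
Proof.
move=> oV qP lV F' fF F'D hF; apply: starf_ext; exact: (linked_d oV qP lV fF F'D hF).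
Qed.

End Final2.


Section Final3.
Variable K : fieldType.
Implicit Types (A B C E F G R T Q V P : kset K) (x y : K).
Variables (D : kset K) (star : kset K -> kset K).
Hypotheses (hD : is_subring D) (hK : is_quotient_field D) (hstar : semistar D star).

Section QP.
Variables (V P : kset K).
Hypotheses (oV : overring D V) (vV : valring V) (qP : quasi_prime D (star_f D star) P)
  (lV : subset (loc D P) V) (nV : ~ mulset P V 1).

Lemma QVnz : nonzero (QV V).
Proof.
have [[[PD [hP [p [p0 Pp]]]] _] Pp'] := qP.
exists p; split => //; apply: (P_in_QV vV _ nV Pp) => z Pz.
by apply: lV; apply: (D_sub_loc hD hP Pp'); exact: PD.
Qed.

Lemma qp_gen op : (forall G, fgen V G -> subset G (op G)) ->
  (forall x, V x -> star_f V op (QV V) x -> QV V x) ->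
  quasi_prime V (star_f V op) (QV V).
Proof.
have [hV val] := vV.
move=> ext inner; split; last exact: (QV_prime hV).
split; first by split; [exact: QV_V|split; [exact: (QV_submod hV val)|exact: QVnz]].
move=> x; split; first by case=> h Vx; apply: inner.
exact: (QV_sup hV val ext QVnz).
Qed.

Lemma qp_d : quasi_prime V (star_f V (@d_op K)) (QV V).
Proof. by apply: qp_gen => [G _ //|x _ [G [_ GQ Gx]]]; apply: GQ. Qed.

Lemma qp_t : quasi_prime V (star_f V (t_op V)) (QV V).
Proof.
have [hV val] := vV.
apply: qp_gen.
  move=> G fG g Gg; exists G; split => // e Ce; rewrite mulrC; exact: Ce.
move=> x Vx [G [fG GQ [G' [fG' G'G vx]]]].
apply: (QV_v hV val fG' _ Vx vx) => z /G'G; exact: GQ.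
Qed.

Lemma qp_ell : quasi_prime V (star_f V (ell_op D star V)) (QV V).
Proof.
have [hV val] := vV.
apply: qp_gen.
  move=> G fG g Gg P' [[[P'D [hP' _]] _] Pp']; rewrite -[g]mulr1; apply: mulset1 => //.
  exists 1, 1; split; [exact: (subring1 hV)|exact: (subring1 hD)|exact: (Pnot1 hP' Pp')|].
  by rewrite divr1.
move=> x Vx [G [fG GQ ex]]; have := ex P qP.
have [_ _ Qm] := QV_submod hV val.
apply: mulset_sub; [exact: (QV0 hV)|by case: (QV_submod hV val)|].
move=> g f Gg [a [s [Va Ds nPs ->]]].
have Vsi : V s^-1 by apply: lV; exists 1, s; split => //; [exact: (subring1 hD)|rewrite div1r].
rewrite mulrC; apply: Qm; [exact: (subringM hV)|exact: GQ].
Qed.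

End QP.

Lemma S_equiv T P' F' : overring D T -> quasi_prime D (star_f D star) P' ->
  subset F' D -> (exists f, F' f /\ ~ P' f) ->
  forall x, mulset (mulset F' T) (frac T D P') x <-> mulset T (frac T D P') x.
Proof.
move=> [hT DT] [[[P'D [hP' _]] _] Pp'] F'D [f [Ff nPf]] x.
set S := frac T D P'.
have T1 := subring1 hT.
have S0 : S 0.
  by exists 0, 1; split; [exact: (subring0 hT)|exact: (subring1 hD)|exact: (Pnot1 hP' Pp')|rewrite mul0r].
have Sadd u v : S u -> S v -> S (u + v).
  move=> [a [s [Ta Ds ns ->]]] [b [t [Tb Dt nt ->]]].
  exists (a * t + b * s), (s * t); split.
  + by apply: (subringD hT); apply: (subringM hT) => //; apply: DT.
  + exact: (subringM hD).
  + exact: (notP_mul Pp').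
  + by rewrite addf_div //; apply: (notP_nz hP').
have Smul t u : T t -> S u -> S (t * u).
  move=> Tt [a [s [Ta Ds ns ->]]]; exists (t * a), s; split => //; last by rewrite mulrA.
  exact: (subringM hT).
have toS : forall A, subset A T -> subset (mulset A S) S.
  by move=> A AT; apply: mulset_sub => // a b /AT Ta Sb; apply: Smul.
have FT_T : subset (mulset F' T) T.
  apply: mulset_sub; [exact: (subring0 hT)|exact: (subringD hT)|].
  by move=> a b Fa Tb; apply: (subringM hT) => //; apply: DT; apply: F'D.
have Df := F'D _ Ff.
have f0 : f != 0 by apply: (notP_nz hP').
split => h.
  have Sx : S x by apply: (toS _ FT_T).
  by rewrite -[x]mul1r; apply: mulset1.
have [a [s [Ta Ds ns ex]]] : S x by apply: (toS T) h.
have s0 : s != 0 by apply: (notP_nz hP').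
have -> : x = f * (a / (s * f)) by rewrite ex; field; rewrite f0 s0.
apply: mulset1; first by rewrite -[f]mulr1; apply: mulset1.
exists a, (s * f); split => //; [exact: (subringM hD)|exact: (notP_mul Pp')].
Qed.

Lemma ell_linked T : overring D T -> linked D star T (ell_op D star T).
Proof.
move=> oT F' fF F'D hF x.
have hE P' (qP' : quasi_prime D (star_f D star) P') :=
  S_equiv oT qP' F'D (P_avoid hD hstar qP' fF hF) x.
split => h P' qP'.
  exact: (proj1 (hE P' qP') (h P' qP')).
exact: (proj2 (hE P' qP') (h P' qP')).
Qed.

Lemma ell_one T : overring D T -> ell_op D star T T 1.
Proof.
move=> [hT DT] P' [[[P'D [hP' _]] _] Pp']; rewrite -[1]mulr1; apply: mulset1.
  exact: (subring1 hT).
exists 1, 1; split; [exact: (subring1 hT)|exact: (subring1 hD)|exact: (Pnot1 hP' Pp')|by rewrite divr1].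
Qed.

Lemma t_one T : overring D T -> t_op T T 1.
Proof.
move=> [hT DT]; have T1 := subring1 hT.
exists (span T [:: 1]); split.
- by apply: (span_fgen (y := 1)) => //; [rewrite inE|exact: oner_neq0].
- apply: span_in_submod; first by case: (Fbar_self hT).
  by move=> y; rewrite inE => /eqP ->.
- move=> e Ce; rewrite mul1r; rewrite -[e]mulr1; apply: Ce.
  by apply: span_gen; rewrite ?inE.
Qed.

Lemma semistar_d T : is_subring T -> semistar T (@d_op K).
Proof.
move=> hT; split.
- by move=> E.
- by move=> x E _ _ y.
- by move=> E F _ _.
- by move=> E _ y.
- by move=> E _ y.
Qed.

End Final3.

Unset Implicit Arguments.
Local Close Scope ring_scope.

Theorem theorem5p7 (K : fieldType) (D : kset K) (star : kset K -> kset K)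
  (hD : is_subring D) (hK : is_quotient_field D) (hstar : semistar D star) :
  (PstarMD D star <->
     (forall (T : kset K) (star' : kset K -> kset K),
        overring D T -> semistar T star' -> linked D star T star' ->
        flat D star T star')) /\
  (PstarMD D star <->
     (forall T : kset K, overring D T -> flat D star T (ell_op D star T))) /\
  (PstarMD D star <->
     (forall T : kset K, overring D T -> linked D star T (t_op T) ->
        flat D star T (t_op T))) /\
  (PstarMD D star <->
     (forall T : kset K, overring D T -> linked D star T (@d_op K) ->
        flat D star T (@d_op K))).
Proof.
have fl := fwd_loc hD hK hstar.
have cv := conv hD hK hstar.
split; [|split; [|split]]; split.
- move=> pmd T star' oT sst lk; split => // Q qQ.
  have [hT _] := oT.
  apply: (fl T star' pmd oT _ lk Q qQ).
  exact: (star_ext sst (Fbar_self hT) (subring1 hT)).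
- move=> H2; apply: cv => V P oV vV qP lV nV.
  have [hV _] := vV.
  have [_ lc] := H2 V (@d_op K) oV (semistar_d hV) (linked_d hD hstar oV qP lV).
  exact: (lc _ (qp_d hD vV qP lV nV)).
- move=> pmd T oT; have lk := ell_linked hD hstar oT; split => // Q qQ.
  exact: (fl T _ pmd oT (ell_one hD oT) lk Q qQ).
- move=> H3; apply: cv => V P oV vV qP lV nV.
  have [_ lc] := H3 V oV.
  exact: (lc _ (qp_ell hD vV qP lV nV)).
- move=> pmd T oT lk; split => // Q qQ.
  exact: (fl T _ pmd oT (t_one oT) lk Q qQ).
- move=> H4; apply: cv => V P oV vV qP lV nV.
  have [_ lc] := H4 V oV (linked_t hD hstar oV qP lV).
  exact: (lc _ (qp_t hD vV qP lV nV)).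
- move=> pmd T oT lk; split => // Q qQ.
  have [hT _] := oT.
  exact: (fl T _ pmd oT (subring1 hT) lk Q qQ).
- move=> H5; apply: cv => V P oV vV qP lV nV.
  have [_ lc] := H5 V oV (linked_d hD hstar oV qP lV).
  exact: (lc _ (qp_d hD vV qP lV nV)).
Qed.
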